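(* Let $\mathbf{L}=(L,\le)$ be a finite nontrivial join-semilattice with greatest element $1$ and let $(R,\vee,\circ)$ be a simple subsemiring of $(\mathrm{JM}_1(\mathbf{L}),\vee,\circ)$ with $|R|>2$ such that $f_{a,b}\in R$ for all $a\in L\setminus\{1\}$ and $b\in L$. Then $(L,\vee)$, with action $f\cdot x=f(x)$, is an irreducible $R$-semimodule.
   Context: $\mathrm{JM}_1(\mathbf{L})$ is the set of maps $f:L\to L$ with $f(x\vee y)=f(x)\vee f(y)$ and $f(1)=1$, a semiring under pointwise join and composition. A semiring is simple if its only congruences (equivalences compatible with addition and with left and right multiplication) are the identity and the full relation. $f_{a,b}(x)=b$ if $x\le a$ and $f_{a,b}(x)=1$ otherwise. An $R$-semimodule is a commutative semigroup $(M,+)$ with an action $R\times M\to M$ satisfying $r(sx)=(rs)x$, $(r+s)x=rx+sx$, $r(x+y)=rx+ry$. A subsemimodule is a subsemigroup closed under the action; a semimodule congruence is an equivalence compatible with $+$ and the action. $M$ is quasitrivial if $rx=sx$ for all $r,s,x$; id-quasitrivial if $rx=x$ for all $r,x$; sub-irreducible if not quasitrivial and all proper subsemimodules are id-quasitrivial; quotient-irreducible if not quasitrivial and its only congruences are the identity and $M\times M$; irreducible if both. *)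

(* Defs.v *)
From mathcomp Require Import all_boot all_order.
Set Implicit Arguments. Unset Strict Implicit. Unset Printing Implicit Defensive.
Import Order.TTheory.
Local Open Scope order_scope.

Definition JM1 (d : Order.disp_t) (L : finTJoinSemilatticeType d) (f : L -> L) : Prop :=
  (forall x y : L, f (x `|` y) = f x `|` f y) /\ f \top = \top.

Definition fjoin (d : Order.disp_t) (L : finTJoinSemilatticeType d)
  (f g : {ffun L -> L}) : {ffun L -> L} := [ffun x => f x `|` g x].
Definition fcomp (d : Order.disp_t) (L : finTJoinSemilatticeType d)
  (f g : {ffun L -> L}) : {ffun L -> L} := [ffun x => f (g x)].

Definition subsemiring_JM1 (d : Order.disp_t) (L : finTJoinSemilatticeType d)
  (R : {set {ffun L -> L}}) : Prop :=
  (forall f, f \in R -> JM1 f) /\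
  (forall f g, f \in R -> g \in R -> fjoin f g \in R) /\
  (forall f g, f \in R -> g \in R -> fcomp f g \in R).

Definition semiring_congruence (d : Order.disp_t) (L : finTJoinSemilatticeType d)
  (R : {set {ffun L -> L}}) (E : {ffun L -> L} -> {ffun L -> L} -> Prop) : Prop :=
  (forall r, r \in R -> E r r) /\
  (forall r s, r \in R -> s \in R -> E r s -> E s r) /\
  (forall r s t, r \in R -> s \in R -> t \in R -> E r s -> E s t -> E r t) /\
  (forall r s t, r \in R -> s \in R -> t \in R -> E r s ->
     [/\ E (fjoin r t) (fjoin s t), E (fcomp t r) (fcomp t s) & E (fcomp r t) (fcomp s t)]).

Definition simple_semiring (d : Order.disp_t) (L : finTJoinSemilatticeType d)
  (R : {set {ffun L -> L}}) : Prop :=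
  forall E, semiring_congruence R E ->
    (forall r s, r \in R -> s \in R -> (E r s <-> r = s)) \/
    (forall r s, r \in R -> s \in R -> E r s).

Definition fab (d : Order.disp_t) (L : finTJoinSemilatticeType d) (a b : L)
  : {ffun L -> L} := [ffun x => if x <= a then b else \top].

(* Generic notions for an R-semimodule (M, add) with action act,
   scalars ranging over the predicate Rs. *)
Section Semimodule.
Variables (A M : Type) (Rs : A -> Prop) (add : M -> M -> M) (act : A -> M -> M).

Definition quasitrivial : Prop :=
  forall r s x, Rs r -> Rs s -> act r x = act s x.

Definition id_quasitrivial_on (S : M -> Prop) : Prop :=
  forall r x, Rs r -> S x -> act r x = x.

Definition subsemimodule (S : M -> Prop) : Prop :=
  (forall x y, S x -> S y -> S (add x y)) /\
  (forall r x, Rs r -> S x -> S (act r x)).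

Definition sub_irreducible : Prop :=
  ~ quasitrivial /\
  forall S, subsemimodule S -> (exists x, ~ S x) -> id_quasitrivial_on S.

Definition semimodule_congruence (E : M -> M -> Prop) : Prop :=
  (forall x, E x x) /\ (forall x y, E x y -> E y x) /\
  (forall x y z, E x y -> E y z -> E x z) /\
  (forall x y z, E x y -> E (add x z) (add y z)) /\
  (forall r x y, Rs r -> E x y -> E (act r x) (act r y)).

Definition quotient_irreducible : Prop :=
  ~ quasitrivial /\
  forall E, semimodule_congruence E ->
    (forall x y, E x y <-> x = y) \/ (forall x y, E x y).

Definition irreducible : Prop := sub_irreducible /\ quotient_irreducible.
End Semimodule.

(* Main.v *)
Require Import Defs.
From mathcomp Require Import all_boot all_order.
From Stdlib Require Import Classical.
Import Order.TTheory.
Local Open Scope order_scope.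

Theorem proposition4p4 (d : Order.disp_t) (L : finTJoinSemilatticeType d)
  (R : {set {ffun L -> L}}) :
  (1 < #|L|)%N ->
  subsemiring_JM1 R ->
  simple_semiring R ->
  (2 < #|R|)%N ->
  (forall a b : L, a != \top -> fab a b \in R) ->
  irreducible (fun f => f \in R) (fun x y : L => x `|` y)
    (fun (f : {ffun L -> L}) (x : L) => f x).
Proof.
move=> cardL [SR _] _ _ HR.
have [a na] : exists a : L, a != \top.
  case/card_gt1P: cardL => x [y [_ _ nxy]].
  case: (eqVneq x \top) => [ex|nx]; last by exists x.
  by exists y; rewrite eq_sym -ex.
have nqt : ~ quasitrivial (fun f => f \in R) (fun (f : {ffun L -> L}) (x : L) => f x).
  move=> H; have := H (fab a a) (fab a \top) a (HR _ _ na) (HR _ _ na).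
  by rewrite !ffunE lexx => e; rewrite e eqxx in na.
split; split => //.
- move=> S [SJ SA] [x nSx] r y Rr Sy.
  case: (eqVneq y \top) => [->|ny]; first by have [_ ->] := SR r Rr.
  exfalso; apply: nSx.
  by have := SA (fab y x) y (HR y x ny) Sy; rewrite ffunE lexx.
- move=> E [Er [Es [Et [Ej Ea]]]].
  have key : forall x y, E x y -> ~~ (x <= y) -> forall b, E \top b.
    move=> x y Exy nxy b.
    have ny : y != \top by apply/eqP => ey; rewrite ey lex1 in nxy.
    have := Ea (fab y b) x y (HR y b ny) Exy.
    by rewrite !ffunE (negbTE nxy) lexx.
  case: (classic (exists x y, E x y /\ x <> y)) => [[x [y [Exy nxy]]]|H].
    right => u v.
    have kt : forall b, E \top b.
      case/boolP: (x <= y) => [lxy|nlxy]; last exact: key Exy nlxy.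
      case/boolP: (y <= x) => [lyx|nlyx]; last exact: key (Es _ _ Exy) nlyx.
      by exfalso; apply: nxy; apply/le_anti; rewrite lxy lyx.
    exact: Et _ _ _ (Es _ _ (kt u)) (kt v).
  left => u v; split => [Euv|->]; last exact: Er.
  by apply: NNPP => nuv; apply: H; exists u, v.
Qed.
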